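(* Let $G$ and $H$ be finite groups and $k$ a positive integer such that $\mu(H)\subseteq\mu(G)$ and $|\mu(G)\setminus\mu(H)|<k$. Then $\omega(G^k)=\omega(G^{k-1}\times H)$, where $G^m$ denotes the direct product of $m$ copies of $G$.
   Context: For a finite group $X$, $\omega(X)$ is the set of orders of elements of $X$, and $\mu(X)$ is the set of elements of $\omega(X)$ that are maximal with respect to divisibility. *)

(* Defs.v *)
From HB Require Import structures.
From mathcomp Require Import all_boot all_fingroup.
Set Implicit Arguments. Unset Strict Implicit. Unset Printing Implicit Defensive.
Local Open Scope group_scope.

Definition omega (gT : finGroupType) : seq nat :=
  undup [seq #[x] | x : gT].

Definition mu (gT : finGroupType) : seq nat :=
  [seq n <- omega gT | all (fun m => (n %| m)%N ==> (m == n)) (omega gT)].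

Definition gpow (gT : finGroupType) (m : nat) : finGroupType :=
  {dffun forall i : 'I_m, gT}.

(* Main.v *)
Require Import Defs.
From HB Require Import structures.
From mathcomp Require Import all_boot all_fingroup.
From mathcomp Require Import all_solvable.

Set Implicit Arguments. Unset Strict Implicit. Unset Printing Implicit Defensive.
Local Open Scope group_scope.

Section Aux.

Lemma omegaP (gT : finGroupType) n : reflect (exists x : gT, #[x] = n) (n \in omega gT).
Proof.
rewrite /omega mem_undup; apply: (iffP mapP) => [[x _ ->]|[x <-]]; first by exists x.
by exists x; rewrite ?mem_enum.
Qed.

Lemma omega_div (gT : finGroupType) d n : (d %| n)%N -> n \in omega gT -> d \in omega gT.
Proof.
move=> dn /omegaP [x ex]; apply/omegaP.
have n0 : (0 < n)%N by rewrite -ex order_gt0.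
have d0 : (0 < d)%N := dvdn_gt0 n0 dn.
have q0 : (0 < n %/ d)%N by rewrite divn_gt0 // dvdn_leq.
exists (x ^+ (n %/ d)); rewrite orderXdiv ex ?dvdn_div //.
by rewrite -{1}(divnK dn) mulKn.
Qed.

Lemma omega1 (gT : finGroupType) : 1%N \in omega gT.
Proof. by apply/omegaP; exists 1; rewrite order1. Qed.

Lemma mu_sub (gT : finGroupType) : {subset mu gT <= omega gT}.
Proof. by move=> n; rewrite mem_filter => /andP[]. Qed.

Lemma omega_mu (gT : finGroupType) n : n \in omega gT -> exists2 m, m \in mu gT & (n %| m)%N.
Proof.
move=> nO.
pose P := fun m => (m \in omega gT) && (n %| m)%N.
have bnd : forall m, P m -> (m <= #|gT|)%N.
  by move=> m /andP[/omegaP[x <-] _]; exact: max_card.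
have ex : exists m, P m by exists n; rewrite /P nO dvdnn.
case: (ex_maxnP ex bnd) => m /andP[mO nm] mx.
exists m => //; rewrite mem_filter mO andbT; apply/allP => m' m'O; apply/implyP => mm'.
have : (m' <= m)%N by apply: mx; rewrite /P m'O (dvdn_trans nm mm').
have m'0 : (0 < m')%N by case/omegaP: m'O => x <-; rewrite order_gt0.
by move=> le; rewrite eqn_leq le (dvdn_leq m'0 mm').
Qed.

Lemma expg_ffun (I : finType) (gT : I -> finGroupType) (x : {dffun forall i, gT i}) i n :
  (x ^+ n) i = (x i) ^+ n.
Proof. by elim: n => [|n IH]; rewrite ?expg0 ?oneg_ffun // !expgS mulg_ffun IH. Qed.

Lemma order_ffun (I : finType) (gT : finGroupType) (x : {dffun forall i : I, gT}) :
  #[x] = \big[lcmn/1%N]_i #[x i].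
Proof.
apply/eqP; rewrite eqn_dvd; apply/andP; split.
  rewrite order_dvdn; apply/eqP/ffunP => i; rewrite expg_ffun oneg_ffun; apply/eqP.
  by rewrite -order_dvdn (biglcmn_sup i).
apply/dvdn_biglcmP => i _; rewrite order_dvdn -expg_ffun expg_order oneg_ffun //.
Qed.

Lemma expg_pair (A B : finGroupType) (p : (A * B)%type) n :
  p ^+ n = (p.1 ^+ n, p.2 ^+ n).
Proof. by elim: n => [|n IH]; rewrite ?expg0 // !expgS IH. Qed.

Lemma order_pair (A B : finGroupType) (p : (A * B)%type) :
  #[p] = lcmn #[p.1] #[p.2].
Proof.
apply/eqP; rewrite eqn_dvd; apply/andP; split.
  rewrite order_dvdn expg_pair; apply/eqP.
  have e1 : p.1 ^+ lcmn #[p.1] #[p.2] = 1 by apply/eqP; rewrite -order_dvdn dvdn_lcml.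
  have e2 : p.2 ^+ lcmn #[p.1] #[p.2] = 1 by apply/eqP; rewrite -order_dvdn dvdn_lcmr.
  by rewrite e1 e2.
have := expg_order p; rewrite expg_pair => -[e1 e2].
by rewrite dvdn_lcm !order_dvdn e1 e2 !eqxx.
Qed.

Definition rep (gT : finGroupType) (v : nat) : gT := odflt 1 [pick g : gT | #[g] == v].

Lemma repP (gT : finGroupType) v : v \in omega gT -> #[rep gT v] = v.
Proof.
move=> /omegaP ex; rewrite /rep; case: pickP => [g /eqP //|none].
by exfalso; case: ex => x ex; have := none x; rewrite ex eqxx.
Qed.

Definition blcm (s : seq nat) := \big[lcmn/1%N]_(v <- s) v.

Lemma omega_gpow (gT : finGroupType) m n :
  (n \in omega (gpow gT m)) <->
  exists s, [/\ size s = m, {subset s <= omega gT} & n = blcm s].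
Proof.
split.
  case/omegaP => x <-; exists [seq #[x i] | i <- enum 'I_m]; split.
  - by rewrite size_map size_enum_ord.
  - by move=> v /mapP[i _ ->]; apply/omegaP; exists (x i).
  by rewrite /blcm big_map big_enum /= order_ffun.
case=> s [sz sub ->]; apply/omegaP.
exists ([ffun i : 'I_m => rep gT (nth 0%N s i)] : gpow gT m).
rewrite order_ffun /blcm (big_nth 0%N) big_mkord sz; apply: eq_bigr => i _.
by rewrite ffunE repP // sub // mem_nth // sz.
Qed.

Lemma omega_prod (A B : finGroupType) n :
  (n \in omega (A * B)%type) <->
  exists a b, [/\ a \in omega A, b \in omega B & n = lcmn a b].
Proof.
split.
  case/omegaP => p <-; exists #[p.1], #[p.2]; rewrite order_pair; split => //.
  - by apply/omegaP; exists p.1.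
  - by apply/omegaP; exists p.2.
case=> a [b [aO bO ->]]; apply/omegaP; exists (rep A a, rep B b).
by rewrite order_pair /= !repP.
Qed.

Lemma blcm_cons v s : blcm (v :: s) = lcmn v (blcm s).
Proof. by rewrite /blcm big_cons. Qed.

Lemma blcm_perm s t : perm_eq s t -> blcm s = blcm t.
Proof. by move=> p; rewrite /blcm (perm_big _ p). Qed.

Lemma not_uniq_map (T : eqType) (f : T -> nat) s : ~~ uniq (map f s) ->
  exists a b t, perm_eq s [:: a, b & t] /\ f a = f b.
Proof.
elim: s => [//|x s IH] /=; rewrite negb_and negbK => /orP[/mapP[b bs fb]|/IH].
  exists x, b, (rem b s); split => //.
  by rewrite perm_cons perm_to_rem.
case=> a [b [t [p fab]]]; exists a, b, (x :: t); split => //.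
apply: (perm_trans (_ : perm_eq _ [:: x, a, b & t])); first by rewrite perm_cons.
by rewrite (perm_catCA [:: x] [:: a; b] t).
Qed.

End Aux.

Theorem lemma3p1 (G H : finGroupType) (k : nat) :
  0 < k ->
  {subset mu H <= mu G} ->
  size [seq n <- mu G | n \notin mu H] < k ->
  omega (gpow G k) =i omega (gpow G k.-1 * H)%type.
Proof.
case: k => [//|k] _ sHG szL n /=.
apply/idP/idP.
- case/omega_gpow => s [sz sub ->].
  pose M := fun v => head 0%N [seq m <- mu G | (v %| m)%N].
  have MP : forall v, v \in omega G -> M v \in mu G /\ (v %| M v)%N.
    move=> v /omega_mu [m mm vm]; rewrite /M.
    have : m \in [seq m <- mu G | (v %| m)%N] by rewrite mem_filter vm mm.
    have E := fun y => mem_filter (fun m => (v %| m)%N) y (mu G).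
    move: E; case: [seq m <- mu G | (v %| m)%N] => [//|y r] /= E _.
    by move: (E y); rewrite inE eqxx /= => /esym/andP[-> ->].
  case: (boolP (has (fun v => M v \in mu H) s)).
    case/hasP => v vs MvH.
    apply/omega_prod; exists (blcm (rem v s)), v; split.
    + apply/omega_gpow; exists (rem v s); split => //.
        by rewrite size_rem // sz.
      by move=> w /mem_rem; apply: sub.
    + by apply: (omega_div (proj2 (MP v (sub v vs)))); apply: mu_sub.
    by rewrite lcmnC -blcm_cons; apply: blcm_perm; apply: perm_to_rem.
  move/hasPn => notH.
  have : ~~ uniq (map M s).
    apply/negP => U.
    have sb : {subset map M s <= [seq n <- mu G | n \notin mu H]}.
      move=> w /mapP[v vs ->]; rewrite mem_filter notH //=.
      by case: (MP v (sub v vs)).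
    have := leq_ltn_trans (uniq_leq_size U sb) szL.
    by rewrite size_map sz ltnn.
  case/not_uniq_map => a [b [t [p Mab]]].
  have as' : a \in s by rewrite (perm_mem p) inE eqxx.
  have bs : b \in s by rewrite (perm_mem p) !inE eqxx orbT.
  have [MaG aM] := MP a (sub a as').
  have [_ bM] := MP b (sub b bs).
  apply/omega_prod; exists (blcm (lcmn a b :: t)), 1%N; split.
  + apply/omega_gpow; exists (lcmn a b :: t); split => //.
      by have := perm_size p; rewrite sz /= => -[].
    move=> w; rewrite inE => /orP[/eqP ->|wt].
      by apply: (omega_div _ (mu_sub MaG)); rewrite dvdn_lcm aM Mab bM.
    by apply: sub; rewrite (perm_mem p) !inE wt !orbT.
  + exact: omega1.
  by rewrite lcmn1 (blcm_perm p) !blcm_cons lcmnA.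
- case/omega_prod => a [h [/omega_gpow [s [sz sub ->]] hO ->]].
  apply/omega_gpow; exists (rcons s h); split.
  + by rewrite size_rcons sz.
  + move=> w; rewrite mem_rcons inE => /orP[/eqP ->|]; last exact: sub.
    have [m mm hm] := omega_mu hO.
    exact: (omega_div hm (mu_sub (sHG m mm))).
  by rewrite (@blcm_perm (rcons s h) (h :: s)) ?perm_rcons // blcm_cons lcmnC.
Qed.
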